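(* For any positive integer $r$, $\mathrm{NCQSym}^r(\mathbf{x})$ is a Hopf algebra, namely a Hopf subalgebra of $\mathrm{NCQSym}(\mathbf{x})$ with product and coproduct inherited from $\mathrm{NCQSym}(\mathbf{x})$.
   Context: Let $\mathbf{x}=\mathbf{x}_1,\mathbf{x}_2,\dots$ be noncommuting variables. A set composition $\Phi=(\Phi_1|\cdots|\Phi_k)$ of a finite set $A$ is an ordered list of disjoint nonempty sets with union $A$; a set partition $\Pi=\Pi_1/\cdots/\Pi_l$ is an unordered such collection. $\mathrm{NCQSym}(\mathbf{x})$ is the set of bounded-degree formal power series $f$ in $\mathbf{x}$ such that for every set composition $\Phi$ of $[n]$ all monomials $\mathbf{x}_{i_1}\cdots\mathbf{x}_{i_n}$ with $i_j=i_\ell$ whenever $j,\ell$ lie in the same block and $i_j<i_\ell$ whenever $j\in\Phi_p,\ell\in\Phi_q$, $p<q$, have the same coefficient. Its product is multiplication of series; its coproduct is: evaluate $f$ on the ordered alphabet $\mathbf{x}_1<\mathbf{x}_2<\cdots<\mathbf{y}_1<\mathbf{y}_2<\cdots$, impose $\mathbf{x}_i\mathbf{y}_j=\mathbf{y}_j\mathbf{x}_i$ for all $i,j$, view the result as $\sum f_1(\mathbf{x})\otimes f_2(\mathbf{y})\in\mathrm{NCQSym}(\mathbf{x})\otimes\mathrm{NCQSym}(\mathbf{y})$ and replace $\mathbf{y}$ by $\mathbf{x}$. For a positive integer $r$, an $r$-set-composition of $[n]$ is a pair $(\Phi,\Pi)$ where $\Phi$ is a set composition of some $A\subseteq[n]$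 all of whose blocks have size $\ge r$ and $\Pi$ is a set partition of $[n]\setminus A$ all of whose blocks have size $<r$. Define $\mathbf{M}_{(\Phi,\Pi)}=\sum\mathbf{x}_{i_1}\cdots\mathbf{x}_{i_n}$ over all tuples with $i_j=i_k$ if and only if $j,k$ lie in the same block of $\Phi$ or of $\Pi$, and $i_j<i_k$ whenever $j\in\Phi_l$, $k\in\Phi_m$, $l<m$. Let $\mathrm{NCQSym}^r_n(\mathbf{x})$ be the $\mathbb{Q}$-span of $\{\mathbf{M}_{(\Phi,\Pi)}\}$ over $r$-set-compositions of $[n]$, and $\mathrm{NCQSym}^r(\mathbf{x})=\bigoplus_{n\ge0}\mathrm{NCQSym}^r_n(\mathbf{x})$. *)

(* Defs.v *)
From mathcomp Require Import all_boot all_order all_algebra.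
From Stdlib Require List.
Set Implicit Arguments. Unset Strict Implicit. Unset Printing Implicit Defensive.
Import GRing.Theory.

(* Formal power series in noncommuting variables x_0 < x_1 < x_2 < ...       *)
(* (the paper's x_1 < x_2 < ... relabelled order-isomorphically), with       *)
(* rational coefficients: a series is its coefficient function on words.     *)
(* The word x_{i_1} ... x_{i_n} is the sequence [:: i_1; ...; i_n].          *)
Definition series := seq nat -> rat.

Definition bounded (f : series) : Prop :=
  exists N : nat, forall w : seq nat, (N < size w)%N -> f w = 0%R.

Definition mul_s (f g : series) : series := fun w =>
  (\sum_(i < (size w).+1) f (take i w) * g (drop i w))%R.

Definition one_s : series := fun w => if w is [::] then 1%R else 0%R.

(* positions 1..n of a word are the elements of 'I_n (0-based)               *)

Definition is_setcomp n (A : {set 'I_n}) (Phi : seq {set 'I_n}) : Prop :=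
  [/\ forall B, List.In B Phi -> B != set0,
      \bigcup_(B <- Phi) B = A
    & forall i j, (i < j < size Phi)%N -> [disjoint nth set0 Phi i & nth set0 Phi j]].

Definition compatible n (Phi : seq {set 'I_n}) (w : seq nat) : Prop :=
  forall (p q : nat) (j k : 'I_n), (p < size Phi)%N -> (q < size Phi)%N ->
    j \in nth set0 Phi p -> k \in nth set0 Phi q ->
    (p = q -> nth 0%N w j = nth 0%N w k) /\ ((p < q)%N -> (nth 0%N w j < nth 0%N w k)%N).

Definition in_NCQSym (f : series) : Prop :=
  bounded f /\
  forall n (Phi : seq {set 'I_n}), is_setcomp [set: 'I_n] Phi ->
    forall w w' : seq nat, size w = n -> size w' = n ->
      compatible Phi w -> compatible Phi w' -> f w = f w'.

Definition r_setcomp (r n : nat) (Phi : seq {set 'I_n}) (Pi : {set {set 'I_n}}) : Prop :=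
  let A := \bigcup_(B <- Phi) B in
  [/\ is_setcomp A Phi,
      forall B, List.In B Phi -> (r <= #|B|)%N,
      partition Pi (~: A)
    & forall B, B \in Pi -> (#|B| < r)%N].

Definition same_block n (Phi : seq {set 'I_n}) (Pi : {set {set 'I_n}}) (j k : 'I_n) : bool :=
  has (fun B : {set 'I_n} => (j \in B) && (k \in B)) Phi || [exists B in Pi, (j \in B) && (k \in B)].

Definition Mser n (Phi : seq {set 'I_n}) (Pi : {set {set 'I_n}}) : series := fun w =>
  if (size w == n) &&
     [forall j : 'I_n, forall k : 'I_n,
        ((nth 0%N w j == nth 0%N w k) == same_block Phi Pi j k) &&
        [forall p : 'I_(size Phi), forall q : 'I_(size Phi),
           [&& (p < q)%N, j \in nth set0 Phi p & k \in nth set0 Phi q] ==>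
           (nth 0%N w j < nth 0%N w k)%N]]
  then 1%R else 0%R.

Definition hom (n : nat) (f : series) : series := fun w =>
  if size w == n then f w else 0%R.

Definition in_NCQSymr (r : nat) (f : series) : Prop :=
  bounded f /\
  forall n : nat, exists c : seq ((seq {set 'I_n} * {set {set 'I_n}}) * rat),
    (forall p, List.In p c -> r_setcomp r p.1.1 p.1.2) /\
    forall w, hom n f w = (\sum_(p <- c) p.2 * Mser p.1.1 p.1.2 w)%R.

(* Iterated coproduct: evaluation on k ordered alphabets                      *)
(*   x^(0) < x^(1) < ... < x^(k-1)  (each alphabet itself ordered),           *)
(* letters of different alphabets commuting.  An element of the k-fold       *)
(* tensor power is identified with its coefficient function on k-tuples of    *)
(* words (us = [:: u_0; ...; u_(k-1)], u_i a word in the alphabet x^(i)).     *)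
(* The coefficient of the class (u_0,...,u_(k-1)) is the sum of the          *)
(* coefficients of all words z in the union alphabet with x^(i)-subword u_i   *)
(* (z is given by the colour sequence c).  The coefficient of such a z in    *)
(* f evaluated on the ordered union alphabet is the coefficient in f of the   *)
(* order-isomorphic x-word obtained by sending the letter a of x^(i) to       *)
(* a + i * B, with B larger than every letter occurring.  For k = 2 this is   *)
(* the coproduct of NCQSym(x) described in the paper.                         *)
Definition cop (f : series) (us : seq (seq nat)) : rat :=
  let k := size us in
  let n := sumn (map size us) in
  let B := (sumn (map sumn us)).+1 in
  (\sum_(c : n.-tuple 'I_k |
          [forall i : 'I_k, count (pred1 i) c == size (nth [::] us i)])
     f (mkseq (fun p =>
          let cs := map (@nat_of_ord k) c in
          let i := nth 0%N cs p in
          nth 0%N (nth [::] us i) (count (pred1 i) (take p cs)) + i * B)%N n))%R.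

Definition coprod (f : series) (u v : seq nat) : rat := cop f [:: u; v].

Definition in_tensor2 (P : series -> Prop) (F : seq nat -> seq nat -> rat) : Prop :=
  exists gs : seq (series * series),
    (forall p, List.In p gs -> P p.1 /\ P p.2) /\
    forall u v, F u v = (\sum_(p <- gs) p.1 u * p.2 v)%R.

(* Antipode of the graded connected bialgebra NCQSym(x) (Takeuchi formula):   *)
(*   S = sum_k (-1)^k m^(k-1) (id - eta eps)^(x k) Delta^(k-1).               *)
(* cuts x w b splits the nonempty word x :: w into consecutive nonempty       *)
(* factors, cutting after position i+1 when b_i is true.                      *)
Fixpoint cuts (x : nat) (w : seq nat) (b : seq bool) : seq (seq nat) :=
  match w, b with
  | y :: w', c :: b' =>
      let ps := cuts y w' b' in
      if c then [:: x] :: ps else (x :: head [::] ps) :: behead ps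
  | _, _ => [:: [:: x]]
  end.

Definition antipode (f : series) : series := fun w =>
  match w with
  | [::] => f [::]
  | x :: w' =>
      (\sum_(b : (size w').-tuple bool)
         (-1) ^+ size (cuts x w' b) * cop f (cuts x w' b))%R
  end.

(* Main.v *)
Require Import Defs.
From mathcomp Require Import all_boot all_order all_algebra.
From Stdlib Require List.
From mathcomp Require Import zify.
Set Implicit Arguments. Unset Strict Implicit. Unset Printing Implicit Defensive.
Import GRing.Theory Num.Theory.

Definition cnt (w : seq nat) x := count (pred1 x) w.

Definition Rr (r : nat) (w t : seq nat) : Prop :=
  size w = size t /\
  forall j k, j < size w -> k < size w ->
    (nth 0 w j == nth 0 w k) = (nth 0 t j == nth 0 t k) /\
    (r <= cnt w (nth 0 w j) -> r <= cnt w (nth 0 w k) ->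
       (nth 0 w j < nth 0 w k) = (nth 0 t j < nth 0 t k)).

Definition PP r (f : series) := bounded f /\ forall w t, Rr r w t -> f w = f t.

Lemma cnt_iota w x : cnt w x = count (fun j => nth 0 w j == x) (iota 0 (size w)).
Proof. by rewrite /cnt -{1}(mkseq_nth 0 w) /mkseq count_map. Qed.

Lemma cnt_pat w t j : size w = size t ->
  (forall j k, j < size w -> k < size w -> (nth 0 w j == nth 0 w k) = (nth 0 t j == nth 0 t k)) ->
  j < size w -> cnt w (nth 0 w j) = cnt t (nth 0 t j).
Proof.
move=> es H hj; rewrite !cnt_iota -es; apply: eq_in_count => k; rewrite mem_iota /= => hk.
by apply: H.
Qed.

Lemma Rr_refl r w : Rr r w w.
Proof. by split=> // j k _ _. Qed.

Lemma Rr_sym r w t : Rr r w t -> Rr r t w.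
Proof.
move=> [es H].
have P : forall j k, j < size w -> k < size w -> (nth 0 w j == nth 0 w k) = (nth 0 t j == nth 0 t k).
  by move=> j k hj hk; case: (H j k hj hk).
split=> // j k; rewrite -es => hj hk.
have [H1 H2] := H j k hj hk; split=> //.
rewrite -(cnt_pat es P hj) -(cnt_pat es P hk) => a b.
by rewrite H2.
Qed.

Lemma Rr_pat r w t : Rr r w t -> forall j k, j < size w -> k < size w ->
  (nth 0 w j == nth 0 w k) = (nth 0 t j == nth 0 t k).
Proof. by move=> [_ H] j k hj hk; case: (H j k hj hk). Qed.

Lemma Rr_cnt r w t j : Rr r w t -> j < size w -> cnt w (nth 0 w j) = cnt t (nth 0 t j).
Proof. by move=> H; apply: cnt_pat; [case: H| apply: Rr_pat H]. Qed.

Lemma Rr_trans r w t u : Rr r w t -> Rr r t u -> Rr r w u.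
Proof.
move=> H1 H2; have [e1 _] := H1; have [e2 _] := H2.
split; first by rewrite e1.
move=> j k hj hk; have hj' : j < size t by rewrite -e1.
have hk' : k < size t by rewrite -e1.
split; first by rewrite (Rr_pat H1) // (Rr_pat H2).
move=> a b; have [_ B1] := H1; have [_ B2] := H2.
have [_ ->] := B1 j k hj hk => //.
have [_ ->] := B2 j k hj' hk' => //; by rewrite -(Rr_cnt H1).
Qed.

Lemma cnt_sub w s x : uniq s -> all (fun p => p < size w) s ->
  cnt (map (nth 0 w) s) x <= cnt w x.
Proof.
move=> us als.
rewrite [X in _ <= X]cnt_iota /cnt count_map -!size_filter; apply: uniq_leq_size; first exact: filter_uniq.
move=> y; rewrite !mem_filter mem_iota /= => /andP [-> ys] /=; exact: (allP als).
Qed.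

Lemma Rr_sub r w t s : Rr r w t -> uniq s -> all (fun p => p < size w) s ->
  Rr r (map (nth 0 w) s) (map (nth 0 t) s).
Proof.
move=> H us als; have [e B] := H.
split; first by rewrite !size_map.
rewrite size_map => j k hj hk.
rewrite !(nth_map 0) //.
have hsj : nth 0 s j < size w by apply: (allP als); apply: mem_nth.
have hsk : nth 0 s k < size w by apply: (allP als); apply: mem_nth.
have [B1 B2] := B _ _ hsj hsk; split=> // a b; apply: B2.
- by apply: leq_trans a (cnt_sub _ us als).
- by apply: leq_trans b (cnt_sub _ us als).
Qed.

Lemma Rr_take r w t i : Rr r w t -> Rr r (take i w) (take i t).
Proof.
move=> H; have [e _] := H.
rewrite -(mkseq_nth 0 w) -(mkseq_nth 0 t) /mkseq -!map_take -e.
apply: Rr_sub => //; first by apply: take_uniq; apply: iota_uniq.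
by apply/allP => x /mem_take; rewrite mem_iota.
Qed.

Lemma Rr_drop r w t i : Rr r w t -> Rr r (drop i w) (drop i t).
Proof.
move=> H; have [e _] := H.
rewrite -(mkseq_nth 0 w) -(mkseq_nth 0 t) /mkseq -!map_drop -e.
apply: Rr_sub => //; first by apply: drop_uniq; apply: iota_uniq.
by apply/allP => x /mem_drop; rewrite mem_iota.
Qed.

Lemma Rr_pieces r s s' ss ss' i : Rr r s s' -> shape ss = shape ss' ->
  flatten ss = s -> flatten ss' = s' -> Rr r (nth [::] ss i) (nth [::] ss' i).
Proof.
move=> H esh es es'; rewrite -es -es' in H.
rewrite -(flattenK ss) -(flattenK ss') !nth_reshape esh.
by apply: Rr_take; apply: Rr_drop.
Qed.

Lemma cuts_flatten x w b : size b = size w -> flatten (cuts x w b) = x :: w.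
Proof.
elim: w x b => [|y w IH] x [|c b] //= [eb].
have := IH y b eb; case: c => //=.
  by move=> ->.
by case: (cuts y w b) => //= p ps <-.
Qed.

Lemma cuts_shape x x' w w' b : size b = size w -> size w' = size w ->
  shape (cuts x w b) = shape (cuts x' w' b).
Proof.
elim: w x x' w' b => [|y w IH] x x' [|y' w'] [|c b] //= [eb] [ew].
have := IH y y' w' b eb ew; case: c => /=; first by move=> ->.
by case: (cuts y w b) => [|p ps]; case: (cuts y' w' b) => [|p' ps'] //= [-> ->].
Qed.


Definition zw (us : seq (seq nat)) B (cs : seq nat) n : seq nat :=
  mkseq (fun p => nth 0 (nth [::] us (nth 0 cs p)) (count (pred1 (nth 0 cs p)) (take p cs))
                  + nth 0 cs p * B) n.

Definition cop' (f : series) us k n B :=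
  (\sum_(c : n.-tuple 'I_k | [forall i : 'I_k, count (pred1 i) c == size (nth [::] us i)])
     f (zw us B (map val c) n))%R.

Lemma copE f us : cop f us = cop' f us (size us) (sumn (map size us)) (sumn (map sumn us)).+1.
Proof. by []. Qed.

Lemma S_iota (i : nat) cs :
  [seq count (pred1 i) (take p cs) | p <- [seq p <- iota 0 (size cs) | nth 0 cs p == i]]
  = iota 0 (count (pred1 i) cs).
Proof.
elim/last_ind: cs => [|cs x IH] //.
rewrite size_rcons -addn1 iotaD filter_cat map_cat.
have E1 : [seq p <- iota 0 (size cs) | nth 0 (rcons cs x) p == i]
        = [seq p <- iota 0 (size cs) | nth 0 cs p == i].
  by apply: eq_in_filter => p; rewrite mem_iota /= => hp; rewrite nth_rcons hp.
rewrite E1.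
have E2 : [seq count (pred1 i) (take p (rcons cs x)) | p <- [seq p <- iota 0 (size cs) | nth 0 cs p == i]]
   = [seq count (pred1 i) (take p cs) | p <- [seq p <- iota 0 (size cs) | nth 0 cs p == i]].
  apply/eq_in_map => p; rewrite mem_filter mem_iota /= => /andP [_ hp].
  by rewrite -cats1 takel_cat // ltnW.
rewrite E2 IH /= add0n nth_rcons ltnn eqxx.
rewrite -cats1 count_cat /= addn0.
case: (x == i) => /=.
  by rewrite take_size_cat // addn1 -addn1 iotaD.
by rewrite addn0 cats0.
Qed.

Lemma nth_le_sumn s j : nth 0 s j <= sumn s.
Proof. elim: s j => [|a s IH] [|j] //=; [exact: leq_addr | exact: leq_trans (IH j) (leq_addl _ _)]. Qed.

Lemma sumn_le_nth ss i : sumn (nth [::] ss i) <= sumn (map sumn ss).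
Proof. elim: ss i => [|a s IH] [|j] //=; [exact: leq_addr | exact: leq_trans (IH j) (leq_addl _ _)]. Qed.

Lemma ltB x y i j B : x < B -> y < B ->
  (x + i * B < y + j * B) = (i < j) || ((i == j) && (x < y)).
Proof.
move=> hx hy; case: (ltngtP i j) => [ij|ij|->] /=.
- have h : i.+1 * B <= j * B by rewrite leq_mul2r ij orbT.
  rewrite mulSn in h; apply: (leq_trans _ (leq_trans h (leq_addl y _))).
  by rewrite ltn_add2r.
- have h : j.+1 * B <= i * B by rewrite leq_mul2r ij orbT.
  rewrite mulSn in h; apply/negbTE; rewrite -leqNgt.
  apply: leq_trans (leq_trans _ h) (leq_addl x _).
  by rewrite leq_add2r ltnW.
- by rewrite ltn_add2r.
Qed.

Lemma eqB x y i j B : x < B -> y < B ->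
  (x + i * B == y + j * B) = (i == j) && (x == y).
Proof.
move=> hx hy; case: (ltngtP i j) => [ij|ij|->] /=.
- by apply: ltn_eqF; rewrite ltB // ij.
- by apply: gtn_eqF; rewrite ltB // ij.
- by rewrite eqn_add2r.
Qed.

Definition goodcs (us : seq (seq nat)) (cs : seq nat) :=
  all (fun i => i < size us) cs /\
  forall i, i < size us -> count (pred1 i) cs = size (nth [::] us i).

Lemma count_take_le (a : pred nat) s k : count a (take k s) <= count a s.
Proof. by rewrite -{2}(cat_take_drop k s) count_cat leq_addr. Qed.

Lemma ai_lt us cs p : goodcs us cs -> p < size cs ->
  count (pred1 (nth 0 cs p)) (take p cs) < size (nth [::] us (nth 0 cs p)).
Proof.
move=> [hall hcnt] hp.
rewrite -hcnt; last by apply: (allP hall); apply: mem_nth.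
have E : count (pred1 (nth 0 cs p)) (take p.+1 cs) = (count (pred1 (nth 0 cs p)) (take p cs)).+1.
  by rewrite (take_nth 0 hp) -cats1 count_cat /= eqxx addn1.
rewrite -E; exact: count_take_le.
Qed.

Definition letter (us : seq (seq nat)) cs p :=
  nth 0 (nth [::] us (nth 0 cs p)) (count (pred1 (nth 0 cs p)) (take p cs)).

Lemma letter_lt us cs B p : (forall i, i < size us -> sumn (nth [::] us i) < B) ->
  goodcs us cs -> p < size cs -> letter us cs p < B.
Proof.
move=> hB [hall _] hp; apply: leq_ltn_trans (nth_le_sumn _ _) (hB _ _).
by apply: (allP hall); apply: mem_nth.
Qed.

Lemma nth_zw us B cs p : p < size cs ->
  nth 0 (zw us B cs (size cs)) p = letter us cs p + nth 0 cs p * B.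
Proof. by move=> hp; rewrite /zw nth_mkseq. Qed.

Lemma zcnt us B cs p : (forall i, i < size us -> sumn (nth [::] us i) < B) ->
  goodcs us cs -> p < size cs ->
  cnt (zw us B cs (size cs)) (nth 0 (zw us B cs (size cs)) p)
  = cnt (nth [::] us (nth 0 cs p)) (letter us cs p).
Proof.
move=> hB hg hp; have [hall hcnt] := hg.
set c := nth 0 cs p; set L := letter us cs p.
rewrite cnt_iota size_mkseq.
transitivity (count (fun p' => (nth 0 cs p' == c) && (letter us cs p' == L)) (iota 0 (size cs))).
  apply: eq_in_count => q; rewrite mem_iota /= => hq.
  by rewrite !nth_zw // eqB ?(letter_lt hB hg) // eq_sym [L == _]eq_sym.
transitivity (count (fun p' => letter us cs p' == L) [seq p' <- iota 0 (size cs) | nth 0 cs p' == c]).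
  by rewrite count_filter; apply: eq_count => q /=; rewrite andbC.
transitivity (count (fun a => nth 0 (nth [::] us c) a == L)
   [seq count (pred1 c) (take p' cs) | p' <- [seq p' <- iota 0 (size cs) | nth 0 cs p' == c]]).
  rewrite count_map; apply: eq_in_count => q; rewrite mem_filter => /andP [/eqP hq _].
  by rewrite /= /letter hq.
rewrite S_iota hcnt; last by apply: (allP hall); apply: mem_nth.
by rewrite cnt_iota.
Qed.

Lemma zw_Rr r us us' B B' cs :
  size us' = size us -> goodcs us cs ->
  (forall i, i < size us -> Rr r (nth [::] us i) (nth [::] us' i)) ->
  (forall i, i < size us -> sumn (nth [::] us i) < B) ->
  (forall i, i < size us' -> sumn (nth [::] us' i) < B') ->
  Rr r (zw us B cs (size cs)) (zw us' B' cs (size cs)).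
Proof.
move=> hs hg hR hB hB'.
have hg' : goodcs us' cs.
  case: hg => hall hcnt; split; first by rewrite hs.
  by move=> i; rewrite hs => hi; rewrite hcnt //; case: (hR i hi).
have [hall _] := hg.
split; first by rewrite !size_mkseq.
move=> j k; rewrite size_mkseq => hj hk.
rewrite (zcnt hB hg hj) (zcnt hB hg hk) !nth_zw //.
have hcj : nth 0 cs j < size us by apply: (allP hall); apply: mem_nth.
have hck : nth 0 cs k < size us by apply: (allP hall); apply: mem_nth.
rewrite !eqB ?(letter_lt hB hg) ?(letter_lt hB' hg') // !ltB ?(letter_lt hB hg) ?(letter_lt hB' hg') //.
case: (eqVneq (nth 0 cs j) (nth 0 cs k)) => [e|ne]; last by [].
have aj := ai_lt hg hj; have ak := ai_lt hg hk.
rewrite /letter -e in aj ak *.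
have [_ H] := hR _ hcj.
have [H1 H2] := H _ _ aj ak.
by rewrite /= ltnn /= H1; split=> // a b; rewrite H2.
Qed.

Lemma zw_Rr' r us us' B B' cs n : size cs = n ->
  size us' = size us -> goodcs us cs ->
  (forall i, i < size us -> Rr r (nth [::] us i) (nth [::] us' i)) ->
  (forall i, i < size us -> sumn (nth [::] us i) < B) ->
  (forall i, i < size us' -> sumn (nth [::] us' i) < B') ->
  Rr r (zw us B cs n) (zw us' B' cs n).
Proof. by move=> <-; apply: zw_Rr. Qed.

Lemma cop_resp r f us us' : PP r f -> size us' = size us ->
  (forall i, i < size us -> Rr r (nth [::] us i) (nth [::] us' i)) ->
  cop f us = cop f us'.
Proof.
move=> [_ Pf] hs hR.
have en : sumn (map size us') = sumn (map size us).
  congr sumn; apply: (@eq_from_nth _ 0); rewrite !size_map // => i hi.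
  have hi' : i < size us by rewrite -hs.
  by rewrite !(nth_map [::]) // ?hs //; case: (hR i hi').
rewrite !copE /cop' hs en.
apply: eq_big => [c|c hc].
  apply: eq_forallb => i; congr (_ == _).
  by case: (hR i (ltn_ord i)).
apply: Pf; apply: zw_Rr' => //.
- by rewrite size_map size_tuple.
- split.
    by apply/allP => x /mapP [y _ ->]; exact: ltn_ord.
  move=> i hi; have := forallP hc (Ordinal hi); rewrite count_map => /eqP <-.
  by apply: eq_count.
- by move=> i hi; rewrite ltnS; apply: sumn_le_nth.
- by move=> i hi; rewrite ltnS; apply: sumn_le_nth.
Qed.

Lemma cop_bounded f us N : (forall w, N < size w -> f w = 0%R) ->
  N < sumn (map size us) -> cop f us = 0%R.
Proof.
move=> HN hN; rewrite copE /cop' big1 // => c _; apply: HN; by rewrite size_mkseq.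
Qed.


Definition blk n (t : seq nat) v : {set 'I_n} := [set j : 'I_n | nth 0 t j == v].

Lemma card_blk n t v : size t = n -> #|blk n t v| = cnt t v.
Proof.
move=> ht; rewrite cnt_iota ht /blk cardsE cardE /enum_mem size_filter -enumT.
rewrite -val_enum_ord count_map; apply: eq_count => j /=.
by [].
Qed.

Definition vs (r : nat) (t : seq nat) := [seq v <- iota 0 (sumn t).+1 | r <= cnt t v].
Definition PhiT (r n : nat) (t : seq nat) := map (blk n t) (vs r t).
Definition PiT (r n : nat) (t : seq nat) : {set {set 'I_n}} :=
  [set blk n t (nth 0 t j) | j : 'I_n in [pred j : 'I_n | cnt t (nth 0 t j) < r]].

Lemma mem_vs r t v : (v \in vs r t) = (v <= sumn t) && (r <= cnt t v).
Proof. by rewrite mem_filter mem_iota andbC. Qed.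

Lemma vs_sorted r t : sorted ltn (vs r t).
Proof. apply: sorted_filter; [exact: ltn_trans | exact: iota_ltn_sorted]. Qed.

Lemma tj_vs r t j : (nth 0 t j \in vs r t) = (r <= cnt t (nth 0 t j)).
Proof. by rewrite mem_vs nth_le_sumn. Qed.

Lemma In_mem (T : eqType) (x : T) s : List.In x s <-> x \in s.
Proof.
elim: s => [|y s IH] //=; rewrite in_cons; split.
  by case=> [->|/IH ->]; rewrite ?eqxx ?orbT.
by case/orP => [/eqP ->|/IH]; [left|right].
Qed.

Lemma bigcup_mem n (x : 'I_n) (s : seq {set 'I_n}) :
  (x \in \bigcup_(B <- s) B) = has (fun B : {set 'I_n} => x \in B) s.
Proof. by elim: s => [|B s IH]; rewrite ?big_nil ?inE // big_cons in_setU IH. Qed.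

Lemma sbT r n t (j k : 'I_n) :
  same_block (PhiT r n t) (PiT r n t) j k = (nth 0 t j == nth 0 t k).
Proof.
rewrite /same_block; apply/idP/idP.
- case/orP.
  + by case/hasP => B /mapP [v _ ->]; rewrite !inE => /andP [/eqP -> /eqP ->].
  + by case/existsP => B /andP [/imsetP [l _ ->]]; rewrite !inE => /andP [/eqP -> /eqP ->].
- move/eqP=> e; case: (leqP r (cnt t (nth 0 t j))) => hl.
  + apply/orP; left; apply/hasP; exists (blk n t (nth 0 t j)).
      by apply: map_f; rewrite tj_vs.
    by rewrite !inE e eqxx.
  + apply/orP; right; apply/existsP; exists (blk n t (nth 0 t j)).
    rewrite /PiT imset_f; last by rewrite inE.
    by rewrite !inE e eqxx.
Qed.

Lemma memPhi r n t (j : 'I_n) p : p < size (vs r t) ->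
  (j \in nth set0 (PhiT r n t) p) = (nth 0 t j == nth 0 (vs r t) p).
Proof. by move=> hp; rewrite /PhiT (nth_map 0) // inE. Qed.

Lemma memA r n t (j : 'I_n) :
  (j \in \bigcup_(B <- PhiT r n t) B) = (r <= cnt t (nth 0 t j)).
Proof.
rewrite bigcup_mem has_map -tj_vs; apply/hasP/idP.
  by case=> v hv; rewrite /= inE => /eqP ->.
by move=> h; exists (nth 0 t j) => //; rewrite /= inE.
Qed.

Lemma vs_lt r t p q : p < size (vs r t) -> q < size (vs r t) -> p < q ->
  nth 0 (vs r t) p < nth 0 (vs r t) q.
Proof. by move=> hp hq pq; apply: (sorted_ltn_nth ltn_trans 0 (vs_sorted r t)). Qed.

Lemma typP r n t w : size t = n ->
  (Mser (PhiT r n t) (PiT r n t) w = 1%R <-> Rr r w t).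
Proof.
move=> ht; rewrite /Mser; split.
- case: ifP => [/andP [/eqP hw /forallP H] _ | _ /eqP]; last by rewrite eq_sym oner_eq0.
  have pat : forall j k, j < size w -> k < size w ->
      (nth 0 w j == nth 0 w k) = (nth 0 t j == nth 0 t k).
    move=> j k hj hk; rewrite hw in hj hk.
    have /andP [/eqP E _] := forallP (H (Ordinal hj)) (Ordinal hk).
    by rewrite E sbT.
  have ord : forall j k, j < size w -> k < size w ->
      r <= cnt t (nth 0 t j) -> r <= cnt t (nth 0 t k) ->
      nth 0 t j < nth 0 t k -> nth 0 w j < nth 0 w k.
    move=> j k hj hk lj lk tjk; rewrite hw in hj hk.
    have vj : nth 0 t j \in vs r t by rewrite tj_vs.
    have vk : nth 0 t k \in vs r t by rewrite tj_vs.
    have hp : index (nth 0 t j) (vs r t) < size (vs r t) by rewrite index_mem.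
    have hq : index (nth 0 t k) (vs r t) < size (vs r t) by rewrite index_mem.
    have pq : index (nth 0 t j) (vs r t) < index (nth 0 t k) (vs r t).
      rewrite ltnNge leq_eqVlt; apply/negP; case/orP => [/eqP e|lt].
        have : nth 0 (vs r t) (index (nth 0 t k) (vs r t)) = nth 0 (vs r t) (index (nth 0 t j) (vs r t)) by rewrite e.
        by rewrite !nth_index // => e'; rewrite e' ltnn in tjk.
      have := vs_lt hq hp lt; rewrite !nth_index // => h.
      by have := ltn_trans h tjk; rewrite ltnn.
    have hp' : index (nth 0 t j) (vs r t) < size (PhiT r n t) by rewrite size_map.
    have hq' : index (nth 0 t k) (vs r t) < size (PhiT r n t) by rewrite size_map.
    have /andP [_ /forallP X] := forallP (H (Ordinal hj)) (Ordinal hk).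
    apply: (implyP (forallP (X (Ordinal hp')) (Ordinal hq'))).
    by rewrite /= pq !memPhi // !nth_index // !eqxx.
  split; first by rewrite hw.
  move=> j k hj hk; split; first exact: pat.
  have es : size w = size t by rewrite hw.
  rewrite (cnt_pat es pat hj) (cnt_pat es pat hk) => lj lk.
  case: (ltngtP (nth 0 t j) (nth 0 t k)) => h.
  + by rewrite ord.
  + by apply/negbTE; rewrite -leqNgt ltnW // ord.
  + have /eqP -> : nth 0 w j == nth 0 w k by rewrite pat // h.
    by rewrite ltnn.
- move=> H; have [es B] := H; have hw : size w = n by rewrite es.
  case: ifP => // /negbT /negP X; exfalso; apply: X.
  rewrite hw eqxx /=.
  apply/forallP => j; apply/forallP => k; apply/andP; split.
    have hj : j < size w by rewrite hw.
    have hk : k < size w by rewrite hw.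
    by rewrite sbT (Rr_pat H hj hk).
  apply/forallP => p; apply/forallP => q; apply/implyP => /and3P [pq jp kq].
  have hp : p < size (vs r t) by rewrite -(size_map (blk n t)); exact: ltn_ord.
  have hq : q < size (vs r t) by rewrite -(size_map (blk n t)); exact: ltn_ord.
  rewrite memPhi // in jp; rewrite memPhi // in kq.
  have hj : j < size w by rewrite hw.
  have hk : k < size w by rewrite hw.
  have lj : r <= cnt w (nth 0 w j).
    rewrite (Rr_cnt H hj) (eqP jp); have := mem_nth 0 hp; rewrite mem_vs => /andP [].
    by [].
  have lk : r <= cnt w (nth 0 w k).
    rewrite (Rr_cnt H hk) (eqP kq); have := mem_nth 0 hq; rewrite mem_vs => /andP [].
    by [].
  have [_ O] := B j k hj hk; rewrite O // (eqP jp) (eqP kq).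
  exact: vs_lt.
Qed.

Lemma disjP n (A B : {set 'I_n}) : (forall x, x \in A -> x \in B -> False) -> [disjoint A & B].
Proof.
move=> H; rewrite disjoint_subset; apply/subsetP => x hA; rewrite inE; apply/negP => hB.
exact: H x hA hB.
Qed.

Lemma typ_rsc r n t : 0 < r -> size t = n -> r_setcomp r (PhiT r n t) (PiT r n t).
Proof.
move=> r0 ht; rewrite /r_setcomp; split.
- split => //.
  + move=> B /In_mem /mapP [v hv ->]; rewrite -card_gt0 card_blk //.
    by move: hv; rewrite mem_vs => /andP [_ h]; exact: leq_trans r0 h.
  + move=> i j /andP [ij jsz].
    have isz : i < size (PhiT r n t) by exact: ltn_trans ij jsz.
    rewrite /PhiT size_map in isz jsz; rewrite /PhiT !(nth_map 0) //.
    apply: disjP => x; rewrite !inE => /eqP -> /eqP e.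
    by have := vs_lt isz jsz ij; rewrite e ltnn.
- by move=> B /In_mem /mapP [v hv ->]; rewrite card_blk //; move: hv; rewrite mem_vs => /andP [].
- apply/and3P; split.
  + apply/eqP/setP => x; rewrite inE memA /cover.
    apply/bigcupP/idP => [[B /imsetP [l hl ->]]|h].
      by rewrite inE => /eqP e; move: hl; rewrite inE -e -ltnNge.
    exists (blk n t (nth 0 t x)); last by rewrite inE.
    by apply: imset_f; rewrite inE ltnNge.
  + apply/trivIsetP => B1 B2 /imsetP [l1 _ ->] /imsetP [l2 _ ->] ne.
    apply: disjP => x; rewrite !inE => /eqP e1 /eqP e2.
    by move: ne; rewrite -e1 -e2 eqxx.
  + apply/negP => /imsetP [l _ e].
    have : l \in blk n t (nth 0 t l) by rewrite inE.
    by rewrite -e inE.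
- by move=> B /imsetP [l hl ->]; rewrite card_blk //; move: hl; rewrite inE.
Qed.


Lemma Mser01 n (Phi : seq {set 'I_n}) Pi w : Mser Phi Pi w = 1%R \/ Mser Phi Pi w = 0%R.
Proof. by rewrite /Mser; case: ifP; [left|right]. Qed.

Lemma MserR1 r n (Phi : seq {set 'I_n}) Pi w t :
  (forall B, B \in Phi -> r <= #|B|) -> Rr r w t ->
  Mser Phi Pi w = 1%R -> Mser Phi Pi t = 1%R.
Proof.
move=> hB H; rewrite [in X in X -> _]/Mser; case: ifP => [/andP [/eqP hw /forallP C] _|]; last first.
  by move=> _ /eqP; rewrite eq_sym oner_eq0.
rewrite /Mser; case: ifP => // /negbT /negP X; exfalso; apply: X.
have [es B] := H; have ht : size t = n by rewrite -es.
rewrite ht eqxx /=.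
apply/forallP => j; apply/forallP => k.
have /andP [/eqP E O] := forallP (C j) k.
have hj : j < size w by rewrite hw.
have hk : k < size w by rewrite hw.
have lg : forall (j : 'I_n) (p : 'I_(size Phi)), j \in nth set0 Phi p -> r <= cnt w (nth 0 w j).
  move=> j' p jp.
  have Bp : nth set0 Phi p \in Phi := mem_nth set0 (ltn_ord p).
  rewrite -(card_blk _ hw); apply: leq_trans (hB _ Bp) _; apply: subset_leq_card.
  apply/subsetP => x hx; rewrite inE.
  have /andP [/eqP E' _] := forallP (C j') x.
  rewrite eq_sym E'; apply/orP; left; apply/hasP; exists (nth set0 Phi p) => //.
  by rewrite jp hx.
apply/andP; split; first by rewrite -(Rr_pat H hj hk) E.
apply/forallP => p; apply/forallP => q; apply/implyP => hpq.
have wjk := implyP (forallP (forallP O p) q) hpq.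
case/and3P: hpq => pq jp kq.
by have [_ <-] := B j k hj hk; [ | exact: lg jp | exact: lg kq].
Qed.

Lemma MserR r n (Phi : seq {set 'I_n}) Pi w t :
  (forall B, B \in Phi -> r <= #|B|) -> Rr r w t -> Mser Phi Pi w = Mser Phi Pi t.
Proof.
move=> hB H.
case: (Mser01 Phi Pi w) => e; first by rewrite e (MserR1 hB H e).
case: (Mser01 Phi Pi t) => e'; last by rewrite e e'.
by have := MserR1 hB (Rr_sym H) e'; rewrite e => /eqP; rewrite eq_sym oner_eq0.
Qed.

Lemma sum01 (L : seq (seq nat)) (f : seq nat -> rat) :
  (forall t, t \in L -> f t = 1%R \/ f t = 0%R) ->
  (\sum_(t <- L) f t)%R = ((count (fun t => f t == 1%R) L)%:R)%R.
Proof.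
elim: L => [|a L IH] H; first by rewrite big_nil.
rewrite big_cons IH; last by move=> t ht; apply: H; rewrite in_cons ht orbT.
rewrite /= natrD; case: (H a (mem_head _ _)) => ->; first by rewrite eqxx.
by rewrite eq_sym oner_eq0 add0r.
Qed.

Lemma ind_eq (a b : rat) : (a = 1%R \/ a = 0%R) -> (b = 1%R \/ b = 0%R) -> (a = 1%R <-> b = 1%R) -> a = b.
Proof.
move=> [] ea [] eb [h1 h2]; rewrite ea eb //.
- by have := h1 ea; rewrite eb => /eqP; rewrite eq_sym oner_eq0.
- by have := h2 eb; rewrite ea => /eqP; rewrite eq_sym oner_eq0.
Qed.

Lemma decomp r (L : seq (seq nat)) (ind : seq nat -> seq nat -> rat) (phi : seq nat -> rat) w :
  (forall t w, t \in L -> ind t w = 1%R \/ ind t w = 0%R) ->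
  (forall t w, t \in L -> (ind t w = 1%R <-> Rr r w t)) ->
  (forall w t, Rr r w t -> phi w = phi t) ->
  (exists2 t0, t0 \in L & Rr r t0 w) ->
  phi w = (\sum_(t <- L) phi t * (ind t w / \sum_(t' <- L) ind t t'))%R.
Proof.
move=> H01 Hind Hphi [t0 t0L Rt0].
have E : forall t, t \in L -> (phi t * (ind t w / \sum_(t' <- L) ind t t')
            = phi t0 / (\sum_(t' <- L) ind t0 t') * ind t w)%R.
  move=> t tL; case: (H01 t w tL) => e; last by rewrite e mul0r !mulr0.
  have Rwt : Rr r w t by apply/(Hind _ _ tL).
  have Rtt0 : Rr r t t0 := Rr_trans (Rr_sym Rwt) (Rr_sym Rt0).
  rewrite (Hphi t t0 Rtt0) e mulr1 mul1r; congr (GRing.mul _ (GRing.inv _)).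
  apply: eq_big_seq => t' t'L; apply: ind_eq; [exact: H01 | exact: H01 |].
  rewrite (Hind _ _ tL) (Hind _ _ t0L); split => h.
    exact: Rr_trans h Rtt0.
  exact: Rr_trans h (Rr_sym Rtt0).
rewrite (eq_big_seq _ E) -big_distrr /=.
have S : (\sum_(t <- L) ind t w = \sum_(t <- L) ind t0 t)%R.
  apply: eq_big_seq => t tL; apply: ind_eq; [exact: H01 | exact: H01 |].
  rewrite (Hind _ _ tL) (Hind _ _ t0L); split => h.
    exact: Rr_trans (Rr_sym h) (Rr_sym Rt0).
  exact: Rr_trans (Rr_sym Rt0) (Rr_sym h).
rewrite S divfK; first exact: Hphi (Rr_sym Rt0).
rewrite sum01; last by move=> t tL; exact: H01.
rewrite pnatr_eq0 -lt0n -has_count; apply/hasP; exists t0 => //.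
by apply/eqP; apply/(Hind _ _ t0L); exact: Rr_refl.
Qed.


Definition rk (w : seq nat) x := size (undup [seq y <- w | y < x]).

Lemma rk_lt w x : x \in w -> rk w x < size w.
Proof.
move=> xw; rewrite /rk; apply: leq_ltn_trans (size_undup _) _.
rewrite size_filter -(count_predC (fun y => y < x) w).
rewrite -[X in X < _]addn0 ltn_add2l -has_count; apply/hasP; exists x => //=.
by rewrite ltnn.
Qed.

Lemma rk_mono w x y : x \in w -> x < y -> rk w x < rk w y.
Proof.
move=> xw xy; rewrite /rk.
have U : uniq (x :: undup [seq z <- w | z < x]).
  by rewrite /= undup_uniq andbT mem_undup mem_filter ltnn.
apply: (@leq_trans (size (x :: undup [seq z <- w | z < x]))) => //.
apply: (uniq_leq_size U) => z; rewrite in_cons mem_undup mem_filter.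
case/orP => [/eqP ->|/andP [zx zw]]; rewrite mem_undup mem_filter ?xy ?xw //.
by rewrite zw (ltn_trans zx xy).
Qed.

Lemma rk_cmp w x y : x \in w -> y \in w ->
  ((rk w x < rk w y) = (x < y)) /\ ((rk w x == rk w y) = (x == y)).
Proof.
move=> xw yw; case: (ltngtP x y) => h.
- by have := rk_mono xw h => h'; rewrite h' (ltn_eqF h').
- by have := rk_mono yw h => h'; rewrite (gtn_eqF h') ltnNge ltnW.
- by rewrite h ltnn eqxx.
Qed.

Lemma normal r w : exists2 t, (size t = size w /\ all (fun a => a < size w) t) & Rr r t w.
Proof.
exists (map (rk w) w).
  split; first by rewrite size_map.
  by apply/allP => a /mapP [x xw ->]; exact: rk_lt.
split; first by rewrite size_map.
rewrite size_map => j k hj hk; rewrite !(nth_map 0) //.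
have [h1 h2] := rk_cmp (mem_nth 0 hj) (mem_nth 0 hk).
by rewrite h1 h2.
Qed.

Fixpoint allw (n k : nat) : seq (seq nat) :=
  if n is n'.+1 then [seq a :: s | a <- iota 0 k, s <- allw n' k] else [:: [::]].

Lemma allw_size n k s : s \in allw n k -> size s = n.
Proof.
elim: n s => [|n IH] s /=; first by rewrite mem_seq1 => /eqP ->.
by case/allpairsP => [[a s'] [_ hs ->]] /=; rewrite (IH _ hs).
Qed.

Lemma allw_mem n k s : size s = n -> all (fun a => a < k) s -> s \in allw n k.
Proof.
elim: n s => [|n IH] [|a s] //= [hs] /andP [ha hal].
apply: (allpairs_f (fun a s => a :: s)); first by rewrite mem_iota.
exact: IH.
Qed.

Definition cc r n t := (\sum_(t' <- allw n n) Mser (PhiT r n t) (PiT r n t) t')%R.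

Lemma PP_NCQSymr r f : 0 < r -> PP r f -> in_NCQSymr r f.
Proof.
move=> r0 [bf Hf]; split => // n.
exists [seq ((PhiT r n t, PiT r n t), (f t / cc r n t)%R) | t <- allw n n]; split.
  move=> p /In_mem /mapP [t ht ->] /=; apply: typ_rsc => //; exact: allw_size ht.
move=> w; rewrite big_map /= /Defs.hom; case: (@eqP _ (size w) n) => hw /=.
  rewrite (@decomp r (allw n n) (fun t w => Mser (PhiT r n t) (PiT r n t) w) f w).
  - by apply: eq_bigr => t _; rewrite mulrA mulrAC.
  - by move=> t w' _; exact: Mser01.
  - by move=> t w' ht; apply: typP; exact: allw_size ht.
  - exact: Hf.
  - have [t [ht hal] Rt] := normal r w; exists t => //.
    by apply: allw_mem; [rewrite ht | rewrite -hw].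
rewrite big1 // => t _; rewrite /Mser.
have /negbTE -> : size w != n by apply/eqP.
by rewrite /= mulr0.
Qed.

Lemma NCQSymr_PP r f : in_NCQSymr r f -> PP r f.
Proof.
move=> [bf H]; split => // w t Rwt; have [es _] := Rwt.
have [c [Hc E]] := H (size w).
have h1 : Defs.hom (size w) f w = f w by rewrite /Defs.hom eqxx.
have h2 : Defs.hom (size w) f t = f t by rewrite /Defs.hom es eqxx.
rewrite -h1 -h2 !E; apply: eq_big_seq => p hp.
have [_ hB _ _] := Hc p ((In_mem p c).2 hp).
congr (_ * _)%R; apply: MserR; last exact: Rwt.
by move=> B hB'; apply: hB; exact/In_mem.
Qed.


Lemma blk_of n (Phi : seq {set 'I_n}) (j : 'I_n) : is_setcomp [set: 'I_n] Phi ->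
  exists2 p, p < size Phi & j \in nth set0 Phi p.
Proof.
case=> _ U _.
have : j \in \bigcup_(B <- Phi) B by rewrite U inE.
rewrite bigcup_mem => /hasP [B hB jB].
by exists (index B Phi); [rewrite index_mem | rewrite nth_index].
Qed.

Lemma PP_NCQSym r f : PP r f -> in_NCQSym f.
Proof.
move=> [bf Hf]; split => // n Phi hP w w' hw hw' Cw Cw'; apply: Hf.
split; first by rewrite hw hw'.
move=> j k hj hk; rewrite hw in hj hk.
have [pj hpj jp] := blk_of (Ordinal hj) hP.
have [pk hpk kp] := blk_of (Ordinal hk) hP.
have [e1 l1] := Cw _ _ _ _ hpj hpk jp kp.
have [e2 l2] := Cw' _ _ _ _ hpj hpk jp kp.
have [_ l1'] := Cw _ _ _ _ hpk hpj kp jp.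
have [_ l2'] := Cw' _ _ _ _ hpk hpj kp jp.
rewrite /= in e1 l1 e2 l2 l1' l2'.
case: (ltngtP pj pk) => h.
- by rewrite (ltn_eqF (l1 h)) (ltn_eqF (l2 h)) (l1 h) (l2 h); split=> //.
- rewrite (gtn_eqF (l1' h)) (gtn_eqF (l2' h)).
  by rewrite ltnNge (ltnW (l1' h)) ltnNge (ltnW (l2' h)); split=> //.
- by rewrite (e1 h) (e2 h) !eqxx !ltnn; split.
Qed.

Lemma PP_one r : PP r one_s.
Proof.
split; first by exists 0 => [[|a w]].
move=> w t [es _]; by case: w t es => [|a w] [|b t].
Qed.

Lemma PP_mul r f g : PP r f -> PP r g -> PP r (mul_s f g).
Proof.
move=> [[Nf Bf] Hf] [[Ng Bg] Hg]; split=> //.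
  exists (Nf + Ng) => w hw; rewrite /mul_s big1 // => i _.
  have hi : i <= size w by rewrite -ltnS.
  case: (leqP i Nf) => h.
    rewrite (Bg (drop i w)) ?mulr0 // size_drop.
    lia.
  by rewrite (Bf (take i w)) ?mul0r // size_takel.
move=> w t H; have [es _] := H.
rewrite /mul_s -es; apply: eq_bigr => i _.
by rewrite (Hf _ _ (Rr_take i H)) (Hg _ _ (Rr_drop i H)).
Qed.

Lemma PP_antipode r f : PP r f -> PP r (antipode f).
Proof.
move=> Pf; have [[N HN] Hf] := Pf; split=> //.
  exists N => [[|x w']] hs //=; rewrite big1 // => b _.
  rewrite (cop_bounded HN) ?mulr0 //.
  by rewrite -/(shape _) -size_flatten cuts_flatten ?size_tuple.
move=> w t H; have [es _] := H.
case: w t es H => [|x w'] [|y v'] // [es] H /=.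
rewrite es; apply: eq_bigr => b _.
have hb : size b = size v' by rewrite size_tuple.
have hb' : size b = size w' by rewrite size_tuple es.
have sh := cuts_shape x y hb' (esym es).
congr (_ * _)%R.
  by have := congr1 size sh; rewrite !size_map => ->.
apply: cop_resp Pf _ _.
  by have := congr1 size sh; rewrite !size_map => ->.
move=> i _; exact: (Rr_pieces i H sh (cuts_flatten x hb') (cuts_flatten y hb)).
Qed.

Lemma PP_ext r f g : (forall w, f w = g w) -> PP r f -> PP r g.
Proof.
move=> E [[N HN] Hf]; split; first by exists N => w hw; rewrite -E HN.
by move=> w t H; rewrite -!E; apply: Hf.
Qed.


Definition indT r (t w : seq nat) : rat := Mser (PhiT r (size t) t) (PiT r (size t) t) w.

Lemma indT01 r t w : indT r t w = 1%R \/ indT r t w = 0%R.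
Proof. exact: Mser01. Qed.

Lemma indTP r t w : indT r t w = 1%R <-> Rr r w t.
Proof. exact: typP. Qed.

Lemma indT0 r t w : size t != size w -> indT r t w = 0%R.
Proof.
move=> ne; case: (indT01 r t w) => // /indTP [es _].
by rewrite es eqxx in ne.
Qed.

Lemma indT_resp r t w w' : Rr r w w' -> indT r t w = indT r t w'.
Proof.
move=> H; apply: ind_eq; [exact: indT01 | exact: indT01 |].
rewrite !indTP; split => h; [exact: Rr_trans (Rr_sym H) h | exact: Rr_trans H h].
Qed.

Lemma PP_e r (a c : rat) t : PP r (fun w => a * (indT r t w / c))%R.
Proof.
split.
  exists (size t) => w hw; rewrite indT0 ?mul0r ?mulr0 //.
  by rewrite neq_ltn hw.
by move=> w w' H /=; rewrite (indT_resp t H).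
Qed.

Lemma In_map (A B : Type) (f : A -> B) (s : seq A) y :
  List.In y (map f s) -> exists x, List.In x s /\ y = f x.
Proof.
elim: s => [|a s IH] //= [<-|/IH [x [hx ->]]]; first by exists a; split; [left|].
by exists x; split; [right|].
Qed.

Lemma PP_coprod r f : 0 < r -> PP r f -> in_tensor2 (in_NCQSymr r) (coprod f).
Proof.
move=> r0 Pf; have [[N HN] Hf] := Pf.
pose F := coprod f.
have FR : forall u u' v v', Rr r u u' -> Rr r v v' -> F u v = F u' v'.
  move=> u u' v v' Hu Hv; apply: cop_resp Pf _ _ => //.
  by move=> [|[|i]] //= _.
have F0 : forall u v, N < size u + size v -> F u v = 0%R.
  by move=> u v h; apply: (cop_bounded HN); rewrite /= addn0.
pose TT := flatten [seq allw m m | m <- iota 0 N.+1].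
have TTs : forall t, t \in TT -> size t <= N.
  move=> t /flatten_mapP [m]; rewrite mem_iota add0n ltnS => hm /allw_size ->.
  by [].
have TTn : forall w, size w <= N -> exists2 t0, t0 \in TT & Rr r t0 w.
  move=> w hw; have [t [ht hal] Rt] := normal r w; exists t => //.
  apply/flatten_mapP; exists (size w); first by rewrite mem_iota.
  by apply: allw_mem; [rewrite ht | rewrite -ht in hal *].
pose cT t := (\sum_(t' <- TT) indT r t t')%R.
have dec : forall (phi : seq nat -> rat) w, size w <= N ->
    (forall w t, Rr r w t -> phi w = phi t) ->
    phi w = (\sum_(t <- TT) phi t * (indT r t w / cT t))%R.
  move=> phi w hw Hphi; apply: decomp => //.
  - by move=> t w' _; exact: indT01.
  - by move=> t w' _; exact: indTP.
  - exact: Hphi.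
  - exact: TTn w hw.
exists [seq ((fun u => F p.1 p.2 * (indT r p.1 u / cT p.1))%R,
             (fun v => 1 * (indT r p.2 v / cT p.2))%R)
       | p <- [seq (t1, t2) | t1 <- TT, t2 <- TT]]; split.
  move=> p hp; have [q [_ ->]] := In_map hp; split; apply: PP_NCQSymr => //; exact: PP_e.
move=> u v; rewrite -[coprod f u v]/(F u v) big_map big_allpairs /=.
case: (leqP (size u) N) => hu; last first.
  rewrite F0; last by apply: leq_trans hu (leq_addr _ _).
  apply: esym; rewrite big1_seq // => t1 /andP [_ h1]; rewrite big1 // => t2 _.
  rewrite (@indT0 r t1 u) ?mul0r ?mulr0 ?mul0r //.
  by rewrite neq_ltn (leq_ltn_trans (TTs _ h1) hu).
case: (leqP (size v) N) => hv; last first.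
  rewrite F0; last by apply: leq_trans hv (leq_addl _ _).
  apply: esym; rewrite big1 // => t1 _; rewrite big1_seq // => t2 /andP [_ h2].
  rewrite (@indT0 r t2 v) ?mul0r ?mulr0 //.
  by rewrite neq_ltn (leq_ltn_trans (TTs _ h2) hv).
have -> : F u v = (\sum_(t <- TT) F t v * (indT r t u / cT t))%R.
  by apply: (dec (fun x => F x v)) => // w t H; apply: FR => //; exact: Rr_refl.
apply: eq_bigr => t1 _.
have -> : F t1 v = (\sum_(t <- TT) F t1 t * (indT r t v / cT t))%R.
  by apply: (dec (fun x => F t1 x)) => // w t H; apply: FR => //; exact: Rr_refl.
rewrite big_distrl /=; apply: eq_bigr => t2 _.
by rewrite mul1r mulrAC.
Qed.

Theorem mainTheorem3 (r : nat) : (0 < r)%N ->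
  [/\ forall f, in_NCQSymr r f -> in_NCQSym f,
      in_NCQSymr r one_s,
      forall f g, in_NCQSymr r f -> in_NCQSymr r g -> in_NCQSymr r (mul_s f g),
      forall f, in_NCQSymr r f -> in_tensor2 (in_NCQSymr r) (coprod f)
    & forall f, in_NCQSymr r f -> in_NCQSymr r (antipode f)].
Proof.
move=> r0; split.
- by move=> f /NCQSymr_PP; exact: PP_NCQSym.
- by apply: PP_NCQSymr => //; exact: PP_one.
- by move=> f g /NCQSymr_PP hf /NCQSymr_PP hg; apply: PP_NCQSymr => //; exact: PP_mul.
- by move=> f /NCQSymr_PP hf; exact: PP_coprod.
- by move=> f /NCQSymr_PP hf; apply: PP_NCQSymr => //; exact: PP_antipode.
Qed.
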